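(* Let $(X,\rho)$ be a complete metric space, $\varphi\in C(\mathbb T,X)$ positively Lagrange stable, and $\tau\in\mathbb T$, $\tau>0$. Then $\varphi$ is $S$-asymptotically $\tau$-periodic, i.e. $\lim_{t\to+\infty}\rho(\varphi(t+\tau),\varphi(t))=0$, if and only if every $\psi\in\omega_\varphi$ is $\tau$-periodic ($\psi(t+\tau)=\psi(t)$ for all $t\in\mathbb T$).
   Context: $\mathbb T\in\{\mathbb R,\mathbb Z,\mathbb R_+,\mathbb Z_+\}$. $C(\mathbb T,X)$ carries the compact-open topology (metric $d(\varphi,\psi)=\sup_{L>0}\min\{\max_{|t|\le L}\rho(\varphi(t),\psi(t)),L^{-1}\}$), with shifts $\varphi^h(t)=\varphi(t+h)$. $\varphi$ is positively Lagrange stable if $\{\varphi^h:h\in\mathbb T,h\ge0\}$ is precompact in $C(\mathbb T,X)$. $\omega_\varphi$ is the set of limits in $C(\mathbb T,X)$ of $\varphi^{h_n}$ with $h_n\in\mathbb T$, $h_n\to+\infty$. *)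

(* Defs.v *)
From Stdlib Require Import Reals Lra.
Open Scope R_scope.

(* The time axis T in {R, Z, R_+, Z_+}, realised as a subset of R. *)
Inductive TimeAxis := TR | TZ | TRp | TZp.

Definition inT (k : TimeAxis) (t : R) : Prop :=
  match k with
  | TR => True
  | TZ => exists z : Z, t = IZR z
  | TRp => 0 <= t
  | TZp => exists n : nat, t = INR n
  end.

Definition is_metric {X : Type} (rho : X -> X -> R) : Prop :=
  (forall x y, 0 <= rho x y) /\
  (forall x y, rho x y = 0 <-> x = y) /\
  (forall x y, rho x y = rho y x) /\
  (forall x y z, rho x z <= rho x y + rho y z).

Definition metric_complete {X : Type} (rho : X -> X -> R) : Prop :=
  forall u : nat -> X,
    (forall eps, 0 < eps -> exists N, forall m n, (N <= m)%nat -> (N <= n)%nat ->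
        rho (u m) (u n) < eps) ->
    exists x, forall eps, 0 < eps -> exists N, forall n, (N <= n)%nat -> rho (u n) x < eps.

(* phi : T -> X (values off T are irrelevant) is continuous on T, i.e. phi in C(T,X). *)
Definition contT {X : Type} (k : TimeAxis) (rho : X -> X -> R) (f : R -> X) : Prop :=
  forall t, inT k t -> forall eps, 0 < eps -> exists delta, 0 < delta /\
    forall s, inT k s -> Rabs (s - t) < delta -> rho (f s) (f t) < eps.

(* Convergence in C(T,X) for the metric
   d(f,g) = sup_{L>0} min{ max_{|t|<=L} rho(f t, g t), 1/L },
   i.e. uniform convergence on every compact [-L,L] of T. *)
Definition convT {X : Type} (k : TimeAxis) (rho : X -> X -> R)
  (f : nat -> R -> X) (g : R -> X) : Prop :=
  forall L, 0 < L -> forall eps, 0 < eps -> exists N, forall n, (N <= n)%nat ->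
    forall t, inT k t -> Rabs t <= L -> rho (f n t) (g t) < eps.

Definition shift {X : Type} (f : R -> X) (h : R) : R -> X := fun t => f (t + h).

(* Positive Lagrange stability: {phi^h : h in T, h >= 0} is precompact in
   C(T,X), i.e. (metric space) every sequence in it has a subsequence
   converging in C(T,X). *)
Definition pos_Lagrange_stable {X : Type} (k : TimeAxis) (rho : X -> X -> R)
  (phi : R -> X) : Prop :=
  forall h : nat -> R, (forall n, inT k (h n) /\ 0 <= h n) ->
    exists sigma : nat -> nat, (forall n, (sigma n < sigma (S n))%nat) /\
    exists psi : R -> X, contT k rho psi /\
      convT k rho (fun n => shift phi (h (sigma n))) psi.

Definition omega_limit {X : Type} (k : TimeAxis) (rho : X -> X -> R)
  (phi psi : R -> X) : Prop :=
  contT k rho psi /\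
  exists h : nat -> R, (forall n, inT k (h n)) /\
    (forall M, exists N, forall n, (N <= n)%nat -> M < h n) /\
    convT k rho (fun n => shift phi (h n)) psi.

Definition S_asympt_periodic {X : Type} (k : TimeAxis) (rho : X -> X -> R)
  (phi : R -> X) (tau : R) : Prop :=
  forall eps, 0 < eps -> exists M, forall t, inT k t -> M < t ->
    rho (phi (t + tau)) (phi t) < eps.

Definition periodicT {X : Type} (k : TimeAxis) (psi : R -> X) (tau : R) : Prop :=
  forall t, inT k t -> psi (t + tau) = psi t.

(* Main.v *)
Require Import Defs.
From Stdlib Require Import Reals.
From Stdlib Require Import ZArith Lra Lia Classical ClassicalEpsilon.
Open Scope R_scope.

Lemma inT_add k a b : inT k a -> inT k b -> inT k (a + b).
Proof.
  destruct k; simpl; auto.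
  - intros [z1 ->] [z2 ->]. exists (z1 + z2)%Z. now rewrite plus_IZR.
  - lra.
  - intros [z1 ->] [z2 ->]. exists (z1 + z2)%nat. now rewrite plus_INR.
Qed.

Lemma inT_0 k : inT k 0.
Proof. destruct k; simpl; auto; try lra. exists 0%Z; auto. exists 0%nat; auto. Qed.

Lemma sigma_ge (s : nat -> nat) : (forall n, (s n < s (S n))%nat) -> forall n, (n <= s n)%nat.
Proof. intros H n; induction n; [lia|]. specialize (H n); lia. Qed.

Lemma nat_above (M : R) : exists N : nat, M <= INR N.
Proof.
  destruct (archimed M) as [H1 _].
  destruct (Z_le_gt_dec 0 (up M)) as [Hz|Hz].
  - exists (Z.to_nat (up M)). rewrite INR_IZR_INZ, Z2Nat.id; lia || lra.
  - exists 0%nat. simpl. assert (IZR (up M) < 0) by (apply IZR_lt; lia). lra.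
Qed.

Theorem mainTheorem13 (k : TimeAxis) (X : Type) (rho : X -> X -> R)
  (Hmetric : is_metric rho) (Hcomplete : metric_complete rho)
  (phi : R -> X) (Hphi : contT k rho phi)
  (Hlag : pos_Lagrange_stable k rho phi)
  (tau : R) (Htau : inT k tau) (Htau_pos : 0 < tau) :
  S_asympt_periodic k rho phi tau <->
  (forall psi : R -> X, omega_limit k rho phi psi -> periodicT k psi tau).
Proof.
  destruct Hmetric as [Hpos [Hzero [Hsym Htri]]].
  split.
  - intros HS psi [Hpsi [h [HhT [Hh Hconv]]]] t Ht.
    apply Hzero.
    set (d := rho (psi (t + tau)) (psi t)).
    destruct (Rle_lt_or_eq_dec 0 d (Hpos _ _)) as [Hd|Hd]; [|auto].
    exfalso.
    destruct (Hconv (Rabs t + Rabs tau + 1)) with (eps := d/3) as [N1 HN1].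
    { pose proof (Rabs_pos t); pose proof (Rabs_pos tau); lra. } { lra. }
    destruct (HS (d/3)) as [M HM]; [lra|].
    destruct (Hh (M - t)) as [N2 HN2].
    set (n := Nat.max N1 N2).
    assert (A1 := HN1 n ltac:(lia) (t + tau) (inT_add _ _ _ Ht Htau)
       ltac:(pose proof (Rabs_triang t tau); pose proof (Rabs_pos t); lra)).
    assert (A2 := HN1 n ltac:(lia) t Ht
       ltac:(pose proof (Rabs_pos tau); lra)).
    assert (A3 := HN2 n ltac:(lia)).
    assert (A4 := HM (t + h n) (inT_add _ _ _ Ht (HhT n)) ltac:(lra)).
    unfold Defs.shift in A1, A2; cbv beta in A1, A2.
    replace (t + tau + h n) with (t + h n + tau) in A1 by ring.
    assert (T1 := Htri (psi (t + tau)) (phi (t + h n + tau)) (psi t)).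
    assert (T2 := Htri (phi (t + h n + tau)) (phi (t + h n)) (psi t)).
    rewrite Hsym in A1.
    unfold d in *. lra.
  - intros H eps Heps.
    destruct (classic (exists M, forall t, inT k t -> M < t ->
       rho (phi (t + tau)) (phi t) < eps)) as [Hm|Hn]; [exact Hm|].
    exfalso.
    assert (Hex : forall n : nat, exists t, inT k t /\ INR n < t /\
              eps <= rho (phi (t + tau)) (phi t)).
    { intro n. apply NNPP; intro Hc. apply Hn. exists (INR n).
      intros t Ht Hlt. apply Rnot_le_lt; intro Hle. apply Hc. eauto. }
    set (h := fun n => proj1_sig (constructive_indefinite_description _ (Hex n))).
    assert (Hh : forall n, inT k (h n) /\ INR n < h n /\
              eps <= rho (phi (h n + tau)) (phi (h n))).
    { intro n. unfold h. destruct (constructive_indefinite_description _ (Hex n)); auto. }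
    destruct (Hlag h) as [sigma [Hs [psi [Hpsi Hconv]]]].
    { intro n. destruct (Hh n) as [? [? _]]. split; auto. pose proof (pos_INR n); lra. }
    assert (Hom : omega_limit k rho phi psi).
    { split; auto. exists (fun n => h (sigma n)). split; [intro n; apply Hh|].
      split; [|exact Hconv].
      intro M. destruct (nat_above M) as [N HN]. exists N. intros n Hn'.
      destruct (Hh (sigma n)) as [_ [Hl _]].
      assert (INR N <= INR (sigma n)) by (apply le_INR; pose proof (sigma_ge _ Hs n); lia).
      lra. }
    assert (Hper := H psi Hom 0 (inT_0 k)).
    rewrite Rplus_0_l in Hper.
    destruct (Hconv (Rabs tau + 1)) with (eps := eps/2) as [N HN].
    { pose proof (Rabs_pos tau); lra. } { lra. }
    assert (A1 := HN N ltac:(lia) tau Htau ltac:(lra)).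
    assert (A2 := HN N ltac:(lia) 0 (inT_0 k) ltac:(rewrite Rabs_R0; pose proof (Rabs_pos tau); lra)).
    unfold Defs.shift in A1, A2; cbv beta in A1, A2. rewrite Rplus_0_l in A2.
    rewrite Hper in A1.
    replace (tau + h (sigma N)) with (h (sigma N) + tau) in A1 by ring.
    destruct (Hh (sigma N)) as [_ [_ Hge]].
    assert (T := Htri (phi (h (sigma N) + tau)) (psi 0) (phi (h (sigma N)))).
    rewrite (Hsym (psi 0)) in T. lra.
Qed.
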